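(* On a cell of the combinatorial model whose ribbon graph $\Gamma$ has only odd-valent vertices, for every edge $e$ with length $\ell$ one has $\Omega[\mathcal P(d\ell)]=d\ell$, where $$\Omega=\sum_f\eta_f,\qquad \mathcal P=\frac14\sum_{x\in V(\Gamma)}\sum_{1\le j<k\le n_x}(-1)^{k-j-1}\frac{\partial}{\partial\ell_j}\wedge\frac{\partial}{\partial\ell_k}.$$
   Context: $\Gamma$ is a metric ribbon graph (from a Jenkins–Strebel differential) with edge lengths $\ell_e$ as coordinates on the cell and faces $f$. For a face $f$ with boundary edges $e_1,\dots,e_{n_f}$ in counterclockwise order, $\eta_f=\sum_{1\le j<k\le n_f}d\ell_j\wedge d\ell_k$. In $\mathcal P$, for each vertex $x$ of valence $n_x$, $e_1,\dots,e_{n_x}$ are the edges incident to $x$ in counterclockwise order with lengths $\ell_1,\dots,\ell_{n_x}$ (both $\Omega$ and $\mathcal P$ are independent of the choice of the first edge). $\mathcal P(d\ell)$ denotes the contraction of the bivector with $d\ell$ and $\Omega[X]$ the contraction of the 2-form with the vector field $X$. *)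

(* Defs.v *)
(* Constant-coefficient forms / bivectors on R^E (E = edges). *)
From HB Require Import structures.
From mathcomp Require Import all_boot all_order all_algebra all_fingroup.
Set Implicit Arguments. Unset Strict Implicit. Unset Printing Implicit Defensive.
Import Order.TTheory GRing.Theory Num.Theory.
Local Open Scope ring_scope.

Section RibbonForms.
Variables (R : realFieldType) (D E : finType).
(* D = darts (half-edges), emap h = the edge carrying the dart h *)
Variable emap : D -> E.

Definition cyc (p : {perm D}) (h : D) : seq D := traject p h #|porbit p h|.

(* sum over the cycles of p of a quantity depending on the cyclic sequence
   (any starting point; the quantities used below do not depend on it) *)
Definition cycle_sum (p : {perm D}) (G : seq D -> R) : R :=
  \sum_(X in porbits p) match [pick h in X] with Some h => G (cyc p h) | None => 0 end.

(* coefficients of a 2-form / bivector: a ^ b = a (x) b - b (x) a *)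
Definition wedge (a b : E) (i j : E) : R :=
  (i == a)%:R * (j == b)%:R - (i == b)%:R * (j == a)%:R.

Definition eta_seq (s : seq E) (i j : E) : R :=
  \sum_(j0 < size s) \sum_(k0 < size s | (j0 < k0)%N)
     wedge (tnth (in_tuple s) j0) (tnth (in_tuple s) k0) i j.

Definition pvert_seq (s : seq E) (i j : E) : R :=
  \sum_(j0 < size s) \sum_(k0 < size s | (j0 < k0)%N)
     (-1) ^+ (k0 - j0 - 1)%N * wedge (tnth (in_tuple s) j0) (tnth (in_tuple s) k0) i j.

(* sigma : counterclockwise rotation of darts around their vertex,
   iota : edge involution.  Face boundaries traversed counterclockwise
   (face on the left) are the cycles of h |-> sigma^-1 (iota h),
   i.e. of the permutation (iota * sigma^-1)%g  (mathcomp: (s*t) x = t (s x)). *)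
Definition face_perm (sigma iota : {perm D}) : {perm D} := (iota * sigma^-1)%g.

Definition Omega (sigma iota : {perm D}) (i j : E) : R :=
  cycle_sum (face_perm sigma iota) (fun s => eta_seq (map emap s) i j).

Definition Pbiv (sigma : {perm D}) (i j : E) : R :=
  4%:R^-1 * cycle_sum sigma (fun s => pvert_seq (map emap s) i j).

Definition dl (e : E) : E -> R := fun i => (i == e)%:R.

(* P(alpha) = contraction of the bivector with alpha (first slot) *)
Definition contrP (sigma : {perm D}) (alpha : E -> R) : E -> R :=
  fun b => \sum_a alpha a * Pbiv sigma a b.

(* Omega[X] = contraction of the 2-form with the vector X (first slot) *)
Definition contrO (sigma iota : {perm D}) (X : E -> R) : E -> R :=
  fun c => \sum_a X a * Omega sigma iota a c.

(* tangent vectors to the cell (all face perimeters fixed) *)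
Definition tangent (sigma iota : {perm D}) (v : E -> R) : Prop :=
  forall F, F \in porbits (face_perm sigma iota) -> \sum_(h in F) v (emap h) = 0.

End RibbonForms.

(* Main.v *)
Require Import Defs.
From HB Require Import structures.
From mathcomp Require Import all_boot all_order all_algebra all_fingroup.
From mathcomp Require Import zify ring lra.
Set Implicit Arguments. Unset Strict Implicit. Unset Printing Implicit Defensive.
Import Order.TTheory GRing.Theory Num.Theory.
Local Open Scope ring_scope.
Section Form.
Variables (R : realFieldType) (E : finType).
Implicit Types (X v : E -> R).

Lemma sum_delta (F : E -> R) p : \sum_a F a * (a == p)%:R = F p.
Proof.
rewrite (bigD1 p) //= eqxx mulr1 big1 ?addr0 // => a /negbTE ->; by rewrite mulr0.
Qed.

Lemma form_sum X v I (r : seq I) (P : pred I) (M : I -> E -> E -> R) :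
  \sum_c (\sum_a X a * \sum_(i <- r | P i) M i a c) * v c =
  \sum_(i <- r | P i) \sum_c (\sum_a X a * M i a c) * v c.
Proof.
rewrite [RHS]exchange_big /=; apply: eq_bigr => c _.
rewrite -mulr_suml; congr (_ * _).
under eq_bigr do rewrite mulr_sumr.
by rewrite exchange_big.
Qed.

Lemma form_scale X v (k : R) (M : E -> E -> R) :
  \sum_c (\sum_a X a * (k * M a c)) * v c = k * \sum_c (\sum_a X a * M a c) * v c.
Proof.
rewrite mulr_sumr; apply: eq_bigr => c _; rewrite mulrA; congr (_ * _).
rewrite mulr_sumr; apply: eq_bigr => a _; by rewrite mulrCA.
Qed.

Lemma wedge_form X v p q :
  \sum_c (\sum_a X a * wedge R p q a c) * v c = X p * v q - X q * v p.
Proof.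
rewrite /wedge.
under eq_bigr do under eq_bigr do rewrite mulrBr !mulrA.
under eq_bigr do rewrite sumrB -!mulr_suml !sum_delta mulrBl.
rewrite sumrB.
under eq_bigr do rewrite mulrAC.
under [X in _ - X]eq_bigr do rewrite mulrAC.
under eq_bigr do rewrite -mulrA. under [X in _ - X]eq_bigr do rewrite -mulrA. by rewrite -!mulr_sumr !sum_delta.
Qed.

Lemma eta_form (s : seq E) X v :
  \sum_c (\sum_a X a * eta_seq R s a c) * v c =
  \sum_(j < size s) X (tnth (in_tuple s) j) *
     (\sum_(k < size s | (j < k)%N) v (tnth (in_tuple s) k)
      - \sum_(k < size s | (k < j)%N) v (tnth (in_tuple s) k)).
Proof.
rewrite /eta_seq form_sum.
under eq_bigr do rewrite form_sum.
under eq_bigr do under eq_bigr do rewrite wedge_form.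
under eq_bigr do rewrite sumrB.
rewrite sumrB.
rewrite [X in _ - X](exchange_big_dep xpredT) //=.
rewrite -sumrB; apply: eq_bigr => j _.
rewrite mulrBr !mulr_sumr; congr (_ - _).
Qed.


Lemma pvert_form (s : seq E) X v :
  \sum_c (\sum_a X a * pvert_seq R s a c) * v c =
  \sum_(j < size s) X (tnth (in_tuple s) j) *
     (\sum_(k < size s | (j < k)%N) (-1) ^+ (k - j - 1) * v (tnth (in_tuple s) k)
      - \sum_(k < size s | (k < j)%N) (-1) ^+ (j - k - 1) * v (tnth (in_tuple s) k)).
Proof.
rewrite /pvert_seq form_sum.
under eq_bigr do rewrite form_sum.
under eq_bigr do under eq_bigr do rewrite form_scale wedge_form.
under eq_bigr do under eq_bigr do rewrite mulrBr.
under eq_bigr do rewrite sumrB.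
rewrite sumrB.
rewrite [X in _ - X](exchange_big_dep xpredT) //=.
rewrite -sumrB; apply: eq_bigr => j _.
rewrite mulrBr !mulr_sumr; congr (_ - _); apply: eq_bigr => k _.
  by rewrite mulrCA.
by rewrite mulrCA.
Qed.

Lemma form_cycle (D : finType) (p : {perm D}) X v (M : seq D -> E -> E -> R) :
  \sum_c (\sum_a X a * cycle_sum p (fun s => M s a c)) * v c =
  cycle_sum p (fun s => \sum_c (\sum_a X a * M s a c) * v c).
Proof.
rewrite /cycle_sum.
transitivity (\sum_(Y in porbits p) \sum_c (\sum_a X a *
   (fun Y a c => match [pick h in Y] with Some h => M (cyc p h) a c | None => 0 end) Y a c) * v c).
  exact: form_sum.
apply: eq_bigr => Y _ /=; case: pickP => [h _|_] //.
by rewrite big1 // => c _; rewrite big1 ?mul0r // => a _; rewrite mulr0.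
Qed.

End Form.

Section Gen.
Variables (R : realFieldType) (D : finType).
Implicit Types (p : {perm D}).

Definition st p (x : D) : D := odflt x [pick y in porbit p x].

Lemma iter_in p k h : iter k p h \in porbit p h.
Proof. by rewrite -permX mem_porbit. Qed.

Lemma pperm_in p x y : (p x \in porbit p y) = (x \in porbit p y).
Proof.
have -> : p x = (p ^+ 1)%g x by rewrite expg1.
by rewrite -!eq_porbit_mem porbit_perm.
Qed.

Lemma st_in0 p x : st p x \in porbit p x.
Proof. by rewrite /st; case: pickP => [z ->|/(_ x)] //; rewrite porbit_id. Qed.

Lemma st_in p x : x \in porbit p (st p x).
Proof. by rewrite porbit_sym st_in0. Qed.

Lemma st_eq p x y : y \in porbit p x -> st p y = st p x.
Proof.
move=> H; have E0 : porbit p y = porbit p x by apply/eqP; rewrite eq_porbit_mem.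
rewrite /st E0; case: pickP => [z _|/(_ x)] //; by rewrite porbit_id.
Qed.

Lemma st_st p x : st p (st p x) = st p x.
Proof. by apply: st_eq; apply: st_in0. Qed.

Lemma st_perm p x : st p (p x) = st p x.
Proof. by apply: st_eq; rewrite pperm_in porbit_id. Qed.

Definition pos p x := index x (cyc p (st p x)).
Definition msz p x := #|porbit p x|.

Lemma pos_lt p x : (pos p x < msz p (st p x))%N.
Proof.
rewrite /pos /msz /cyc -{2}(size_traject p (st p x) #|porbit p (st p x)|).
by rewrite index_mem -porbit_traject st_in.
Qed.

Lemma iter_pos p x : iter (pos p x) p (st p x) = x.
Proof.
rewrite /pos -(nth_traject p (pos_lt p x) (st p x)).
by rewrite nth_index // /cyc -porbit_traject st_in.
Qed.

Lemma pos_iter p h k : st p h = h -> (k < msz p h)%N ->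
  pos p (iter k p h) = k /\ st p (iter k p h) = h.
Proof.
move=> Hh Hk.
have Hs : st p (iter k p h) = h by rewrite (st_eq (iter_in p k h)).
split=> //; rewrite /pos Hs /cyc -(nth_traject p Hk h).
by rewrite index_uniq ?size_traject ?uniq_traject_porbit.
Qed.

Lemma pos_perm p x : pos p (p x) =
  if ((pos p x).+1 < msz p (st p x))%N then (pos p x).+1 else 0%N.
Proof.
have Hpx : p x = iter (pos p x).+1 p (st p x) by rewrite iterS iter_pos.
case: ifP => H.
  by rewrite Hpx; case: (pos_iter (st_st p x) H).
have Hm : (pos p x).+1 = msz p (st p x).
  by apply/eqP; rewrite eqn_leq pos_lt leqNgt H.
rewrite Hpx Hm /msz iter_porbit.
have Hm0 : (0 < msz p (st p x))%N by apply: leq_ltn_trans (pos_lt p x).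
by case: (pos_iter (st_st p x) Hm0).
Qed.

Lemma sum_cyc p h (F : D -> R) x0 :
  \sum_(i < size (cyc p h)) F (nth x0 (cyc p h) i) = \sum_(x in porbit p h) F x.
Proof.
transitivity (\sum_(x <- cyc p h) F x); first by rewrite (big_nth x0) big_mkord.
rewrite big_uniq ?uniq_traject_porbit //.
by apply: eq_bigl => x; rewrite -porbit_traject.
Qed.

Lemma cycle_sum_local p (G : seq D -> R) (f : D -> R) :
  (forall h, st p h = h -> G (cyc p h) = \sum_(x in porbit p h) f x) ->
  cycle_sum p G = \sum_x f x.
Proof.
move=> H; rewrite /cycle_sum (partition_big_imset (porbit p)) /=.
apply: eq_bigr => X /imsetP [y _ ->].
case E0: [pick h in porbit p y] => [h0|]; last first.
  by move: E0; case: pickP => // /(_ y); rewrite porbit_id.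
have Hh0 : h0 \in porbit p y by move: E0; case: pickP => // z Hz [<-].
have Ey : porbit p y = porbit p h0.
  by apply/eqP; rewrite eq_sym eq_porbit_mem.
rewrite H; last by rewrite /st -Ey E0.
by rewrite Ey; apply: eq_bigl => x; rewrite eq_porbit_mem.
Qed.

End Gen.

Section Tele.
Variables (R : realFieldType).

Lemma sgn_shift (a b : nat) : (b.+1 < a)%N -> (-1) ^+ (a - b - 1) = - (-1) ^+ (a - b.+1 - 1) :> R.
Proof.
move=> H; have -> : (a - b - 1 = (a - b.+1 - 1).+1)%N by lia.
by rewrite exprS mulN1r.
Qed.

Lemma teleA (q : nat -> R) (m : nat) n j : (j + n.+1 = m)%N ->
  \sum_(j.+1 <= k < m) (-1) ^+ (k - j - 1) * (q k + q k.-1) = q j - (-1) ^+ n * q m.-1.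
Proof.
elim: n j => [|n IH] j Hj.
  rewrite -Hj addn1 big_geq // expr0 mul1r /=. by rewrite subrr.
rewrite big_ltn; last by lia.
have -> : (j.+1 - j - 1 = 0)%N by lia.
rewrite expr0 mul1r /=.
rewrite (eq_big_nat _ _ (F2 := fun k => - ((-1) ^+ (k - j.+1 - 1) * (q k + q k.-1)))); last first.
  move=> k /andP [H1 H2]; by rewrite sgn_shift ?mulNr //; lia.
rewrite sumrN IH; last by lia.
rewrite exprS; lra.
Qed.

Lemma teleB (q : nat -> R) (m : nat) j :
  \sum_(0 <= k < j.+1) (-1) ^+ (j - k) * (q k + (if k is k'.+1 then q k' else q m.-1))
  = q j + (-1) ^+ j * q m.-1.
Proof.
elim: j => [|j IH].
  by rewrite big_nat1 subnn expr0 !mul1r.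
rewrite big_nat_recr //= subnn expr0 mul1r.
rewrite (eq_big_nat _ _ (F2 := fun k => - ((-1) ^+ (j - k) * (q k + (if k is k'.+1 then q k' else q m.-1))))); last first.
  move=> k /andP [H1 H2]; have -> : (j.+1 - k = (j - k).+1)%N by lia.
  by rewrite exprS mulN1r mulNr.
rewrite sumrN IH exprS; lra.
Qed.


Lemma tele (q : nat -> R) m j : odd m -> (j < m)%N ->
  \sum_(j.+1 <= k < m) (-1) ^+ (k - j - 1) * (q k + (if k is k'.+1 then q k' else q m.-1))
  - \sum_(0 <= k < j) (-1) ^+ (j - k - 1) * (q k + (if k is k'.+1 then q k' else q m.-1))
  = q j - (if j is j'.+1 then q j' else q m.-1).
Proof.
move=> Hodd Hj.
rewrite (eq_big_nat _ _ (F2 := fun k => (-1) ^+ (k - j - 1) * (q k + q k.-1))); last first.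
  by move=> k /andP [H1 H2]; case: k H1 H2.
rewrite (teleA q (n := (m - j.+1)%N)); last by lia.
case: j Hj => [|j] Hj.
  rewrite big_geq // subr0 -signr_odd.
  have -> : odd (m - 1) = false.
    by move: Hodd; case: m Hj => // m' _ /=; rewrite subn1 /=; case: (odd m').
  by rewrite expr0 mul1r.
rewrite (eq_big_nat _ _ (F2 := fun k => (-1) ^+ (j - k) * (q k + (if k is k'.+1 then q k' else q m.-1)))); last first.
  by move=> k /andP [H1 H2]; have -> : (j.+1 - k - 1 = j - k)%N by lia.
rewrite teleB.
have Hn : odd (m - j.+2) = ~~ odd j.
  have Hm : m = ((m - j.+2) + j).+2 by lia.
  move: Hodd; rewrite {1}Hm /= oddD negbK; case: (odd j); case: (odd (m - j.+2)) => //.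
rewrite -(signr_odd _ (m - j.+2)) -(signr_odd _ j) Hn.
case: (odd j); rewrite /= ?expr0 ?expr1; lra.
Qed.

End Tele.

Section Nat.
Variable (R : realFieldType).
Lemma sum_gt (F : nat -> R) m j :
  \sum_(k < m | (j < k)%N) F k = \sum_(j.+1 <= k < m) F k.
Proof. by rewrite big_geq_mkord. Qed.

Lemma sum_lt (F : nat -> R) m j : (j <= m)%N ->
  \sum_(k < m | (k < j)%N) F k = \sum_(0 <= k < j) F k.
Proof. by move=> H; rewrite (big_nat_widen _ _ _ _ _ H) big_mkord. Qed.
End Nat.

Section Main.
Variables (R : realFieldType) (D E : finType) (sigma iota : {perm D}) (emap : D -> E).
Hypotheses (iota_invol : forall h, iota (iota h) = h) (iota_nofix : forall h, iota h != h)
  (emap_fibre : forall h h', emap h = emap h' <-> (h' = h \/ h' = iota h))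
  (valence_odd : forall h, odd #|porbit sigma h|).

Local Notation fp := (face_perm sigma iota).

Lemma fp_iota y : fp (iota y) = (sigma^-1)%g y.
Proof. by rewrite /face_perm permM iota_invol. Qed.

Lemma fibre_eq x y : (emap x == emap y) = (x == y) || (x == iota y).
Proof.
apply/idP/idP => [/eqP H | /orP [] /eqP ->] //.
  by have [->|->] := (emap_fibre y x).1 (esym H); rewrite eqxx ?orbT.
by apply/eqP; apply/(emap_fibre _ _).2; right; rewrite iota_invol.
Qed.

Lemma emap_iota x : emap (iota x) = emap x.
Proof. by apply/eqP; rewrite fibre_eq eqxx orbT. Qed.

Lemma sum_fibre (F : D -> R) y : \sum_(x | emap x == emap y) F x = F y + F (iota y).
Proof.
rewrite (eq_bigl (fun x => (x == y) || (x == iota y))); last by move=> x; rewrite fibre_eq.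
rewrite (bigD1 y) ?eqxx //= (bigD1 (iota y)) /=; last first.
  by rewrite eqxx orbT iota_nofix.
rewrite big1 ?addr0 // => x /andP [/andP [H1 H2] H3].
by move: H1; rewrite (negbTE H2) (negbTE H3).
Qed.

Lemma sum_edge (F : D -> R) h : \sum_x (emap x == emap h)%:R * F x = F h + F (iota h).
Proof.
rewrite -sum_fibre [RHS]big_mkcond; apply: eq_bigr => x _.
by case: eqP; rewrite ?mul1r ?mul0r.
Qed.

Lemma tnth_cyc (p : {perm D}) h (k : 'I_(size (map emap (cyc p h)))) :
  tnth (in_tuple (map emap (cyc p h))) k = emap (iter k p h).
Proof.
have Hk : (k < #|porbit p h|)%N by have := ltn_ord k; rewrite {2}size_map size_traject.
rewrite (tnth_nth (emap h)) /= (nth_map h); last by rewrite size_traject.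
by rewrite nth_traject.
Qed.

Lemma vertex_cycle e (w Q : D -> R) h0 :
  (forall y, w y + w (iota y) = Q y + Q ((sigma^-1)%g y)) ->
  \sum_c (\sum_a dl R e a * pvert_seq R (map emap (cyc sigma h0)) a c) *
      (\sum_(x | emap x == c) w x)
  = \sum_(x in porbit sigma h0) (emap x == e)%:R * (Q x - Q ((sigma^-1)%g x)).
Proof.
move=> HQ.
rewrite pvert_form -(sum_cyc sigma h0 _ h0).
set m := #|porbit sigma h0|.
have Hm0 : (0 < m)%N by rewrite lt0n card_porbit_neq0.
pose q k := Q (iter k sigma h0).
have Hqp : forall k, (k < m)%N -> Q ((sigma^-1)%g (iter k sigma h0)) =
    (if k is k'.+1 then q k' else q m.-1).
  case=> [|k] Hk /=; last by rewrite permK.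
  have : iter m sigma h0 = h0 by rewrite iter_porbit.
  by move: Hm0; case: (m) => // m' _; rewrite iterS => <-; rewrite permK.
have HR : forall k, (k < m)%N -> \sum_(x | emap x == emap (iter k sigma h0)) w x =
    q k + (if k is k'.+1 then q k' else q m.-1).
  by move=> k Hk; rewrite sum_fibre HQ Hqp.
under eq_bigr => j _.
  rewrite tnth_cyc.
  under eq_bigr => k _ do rewrite tnth_cyc.
  under [in X in _ - X]eq_bigr => k _ do rewrite tnth_cyc.
  over.
rewrite /= size_map /cyc size_traject -/m.
apply: eq_bigr => j _.
have Hj := ltn_ord j.
rewrite nth_traject // /dl.
rewrite (sum_gt (fun k => (-1) ^+ (k - j - 1) * \sum_(x | emap x == emap (iter k sigma h0)) w x)).
rewrite (sum_lt (fun k => (-1) ^+ (j - k - 1) * \sum_(x | emap x == emap (iter k sigma h0)) w x)); last by apply: ltnW.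
rewrite (eq_big_nat _ _ (F2 := fun k => (-1) ^+ (k - j - 1) * (q k + (if k is k'.+1 then q k' else q m.-1)))); last first.
  by move=> k /andP [H1 H2]; rewrite HR.
rewrite [X in _ - X](eq_big_nat _ _ (F2 := fun k => (-1) ^+ (j - k - 1) * (q k + (if k is k'.+1 then q k' else q m.-1)))); last first.
  move=> k /andP [H1 H2]; rewrite HR //; lia.
rewrite tele //; last by apply: valence_odd.
by rewrite Hqp.
Qed.


Lemma vertex_lemma e (w Q : D -> R) :
  (forall y, w y + w (iota y) = Q y + Q ((sigma^-1)%g y)) ->
  \sum_x contrP emap sigma (dl R e) (emap x) * w x =
  4%:R^-1 * \sum_x (emap x == e)%:R * (Q x - Q ((sigma^-1)%g x)).
Proof.
move=> HQ.
transitivity (\sum_b contrP emap sigma (dl R e) b * (\sum_(x | emap x == b) w x)).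
  rewrite (partition_big emap xpredT) //=; apply: eq_bigr => b _.
  by rewrite mulr_sumr; apply: eq_big => [x|x /eqP ->] //.
rewrite /contrP /Pbiv form_scale form_cycle; congr (_ * _).
apply: (cycle_sum_local (f := fun x => (emap x == e)%:R * (Q x - Q ((sigma^-1)%g x)))).
by move=> h0 _; apply: vertex_cycle.
Qed.

Lemma sum_orbit_nat (p : {perm D}) h (F : D -> R) :
  \sum_(x in porbit p h) F x = \sum_(0 <= k < #|porbit p h|) F (iter k p h).
Proof.
rewrite -(sum_cyc p h F h) big_mkord /cyc.
rewrite size_traject; apply: eq_bigr => i _.
by rewrite nth_traject.
Qed.

Definition rho (v : E -> R) (x : D) : R :=
  \sum_((pos fp x).+1 <= k < msz fp (st fp x)) v (emap (iter k fp (st fp x)))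
  - \sum_(0 <= k < pos fp x) v (emap (iter k fp (st fp x))).

Lemma face_cycle (X v : E -> R) h0 : st fp h0 = h0 ->
  \sum_c (\sum_a X a * eta_seq R (map emap (cyc fp h0)) a c) * v c
  = \sum_(x in porbit fp h0) X (emap x) * rho v x.
Proof.
move=> Hst.
rewrite eta_form -(sum_cyc fp h0 _ h0).
under eq_bigr => j _.
  rewrite tnth_cyc.
  under eq_bigr => k _ do rewrite tnth_cyc.
  under [in X in _ - X]eq_bigr => k _ do rewrite tnth_cyc.
  over.
rewrite /= size_map /cyc size_traject.
apply: eq_bigr => j _.
have Hj := ltn_ord j.
rewrite nth_traject //.
rewrite (sum_gt (fun k => v (emap (iter k fp h0)))).
rewrite (sum_lt (fun k => v (emap (iter k fp h0)))); last by apply: ltnW.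
have [Hp Hs] := pos_iter Hst Hj.
by rewrite /rho Hp Hs.
Qed.

Lemma rho_fp v : tangent emap sigma iota v ->
  forall x, rho v (fp x) = rho v x - v (emap x) - v (emap (fp x)).
Proof.
move=> Ht x.
rewrite /rho st_perm pos_perm.
have Hj := pos_lt fp x.
have Hx := iter_pos fp x.
move: Hj Hx; set h0 := st fp x; set m := msz fp h0; set j := pos fp x => Hj Hx.
have Hfx : fp x = iter j.+1 fp h0 by rewrite iterS Hx.
case: ifP => H.
  rewrite big_nat_recr //= (big_ltn H) Hx -Hfx; lra.
have Hm : j.+1 = m by apply/eqP; rewrite eqn_leq Hj leqNgt H.
have HS : \sum_(0 <= k < m) v (emap (iter k fp h0)) = 0.
  by rewrite /m /msz -(sum_orbit_nat fp h0 (fun y => v (emap y))); apply: Ht; apply: imset_f.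
have Hm0 : (0 < m)%N by rewrite -Hm.
have HS1 := HS; rewrite (big_ltn Hm0) /= in HS1.
have HS2 := HS; rewrite -Hm big_nat_recr //= Hx in HS2.
have Hf0 : fp x = h0 by rewrite Hfx Hm /m /msz iter_porbit.
rewrite (big_geq (n := 0%N)) // (big_geq (m := j.+1) (n := m)) ?Hm // Hf0.
lra.
Qed.

End Main.

Unset Implicit Arguments.
Theorem mainTheorem6 (R : realFieldType) (D E : finType)
  (sigma iota : {perm D}) (emap : D -> E)
  (iota_invol : forall h, iota (iota h) = h)
  (iota_nofix : forall h, iota h != h)
  (emap_fibre : forall h h', emap h = emap h' <-> (h' = h \/ h' = iota h))
  (emap_surj : forall e : E, exists h, emap h = e)
  (connected : forall h h' : D,
      connect (fun a b => (b == sigma a) || (b == iota a)) h h')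
  (valence_ge3 : forall h : D, (3 <= #|porbit sigma h|)%N)
  (valence_odd : forall h : D, odd #|porbit sigma h|) :
  forall e : E,
    tangent emap sigma iota (contrP (R := R) emap sigma (dl R e)) /\
    (forall v : E -> R, tangent emap sigma iota v ->
       \sum_(c : E) contrO emap sigma iota (contrP emap sigma (dl R e)) c * v c
       = \sum_(c : E) dl R e c * v c).
Proof.
move=> e; have [h Hh] := emap_surj e.
set X := contrP emap sigma (dl R e).
have fpi := fp_iota sigma iota_invol.
have fpinv : forall z, (sigma^-1)%g (iota z) = face_perm sigma iota z.
  by move=> z; rewrite -fpi iota_invol.
split.
  move=> F /imsetP [y _ ->].
  transitivity (\sum_x X (emap x) * (x \in porbit (face_perm sigma iota) y)%:R).
    rewrite big_mkcond; apply: eq_bigr => x _.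
    by case: (x \in _); rewrite ?mulr1 ?mulr0.
  rewrite (@vertex_lemma _ _ _ _ _ _ iota_invol iota_nofix emap_fibre valence_odd e _
             (fun x => (x \in porbit (face_perm sigma iota) y)%:R)).
    rewrite -Hh (sum_edge iota_invol iota_nofix emap_fibre) fpinv -fpi !(pperm_in (face_perm sigma iota)).
    by rewrite addrC addrA subrK subrr mulr0.
  by move=> z; rewrite -fpi (pperm_in (face_perm sigma iota)).
move=> v Hv.
rewrite /contrO /Omega form_cycle.
rewrite (cycle_sum_local (f := fun x => X (emap x) * rho sigma iota emap v x)); last first.
  by move=> h0 Hst; apply: face_cycle.
have Hr := rho_fp Hv.
rewrite (@vertex_lemma _ _ _ _ _ _ iota_invol iota_nofix emap_fibre valence_odd e _
           (fun x => rho sigma iota emap v x + v (emap x))); last first.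
  move=> z; rewrite -fpi Hr (emap_iota iota_invol emap_fibre) fpi; lra.
rewrite -Hh (sum_edge iota_invol iota_nofix emap_fibre) fpinv -fpi !Hr.
rewrite (emap_iota iota_invol emap_fibre) fpi.
under [RHS]eq_bigr do rewrite /dl mulrC.
rewrite sum_delta.
field.
done.
Qed.
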